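(* The regularly locally finitely presentable modules are dense, with respect to the interleaving distance, in the space of (isomorphism classes of) q-tame upper semicontinuous $n$-parameter persistence modules.
   Context: Fix a field $\mathbb{k}$. An $n$-parameter persistence module is a functor $V:\mathbf{R}^n\to\mathbf{Vect}_{\mathbb{k}}$ ($\mathbf{R}^n$ with componentwise order), structure maps $V_{s,t}$. Write $s\ll t$ if $s_i<t_i$ for all $i$; $s+\varepsilon$ adds $\varepsilon$ to each coordinate. $V$ is q-tame if $V_{s,t}$ has finite rank whenever $s\ll t$; upper semicontinuous if $V_s\to\lim_{\varepsilon>0}V_{s+\varepsilon}$ is an isomorphism for all $s$; pointwise finite-dimensional if every $V_s$ is finite-dimensional. Shifts $V[\varepsilon]_s=V_{s+\varepsilon}$, $\eta_\varepsilon:V\to V[\varepsilon]$ the structure maps; an $\varepsilon$-interleaving is $f:V\to W[\varepsilon]$, $g:W\to V[\varepsilon]$ with $g[\varepsilon]f=\eta_{2\varepsilon}$, $f[\varepsilon]g=\eta_{2\varepsilon}$, and $d_I$ is the infimal such $\varepsilon$. For $\varepsilon>0$ and the regular grid $\mathbf{Q}=(\varepsilon\mathbb{Z})^n$, the restriction-extension $V_{\mathbf{Q}}$ is the module with $(V_{\mathbf{Q}})_s=V_{\sup\{p\in\mathbf{Q}:p\le s\}}$ (componentwise rounding down to $\varepsilon\mathbb{Z}$), with structure maps induced from $V$. A q-tame upper semicontinuous module $V$ is regularly locally finitely presentable if it is pointwise finite-dimensional and $V\cong V_{\mathbf{Q}}$ for some regular grid $\mathbf{Q}=(\varepsilon\mathbb{Z})^n$,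 $\varepsilon>0$. *)

(* Defs.v *)
From HB Require Import structures.
From mathcomp Require Import all_boot all_order all_algebra.
From mathcomp Require Import reals.
Set Implicit Arguments. Unset Strict Implicit. Unset Printing Implicit Defensive.
Import Order.TTheory GRing.Theory Num.Theory.
Local Open Scope ring_scope.

Section PersMod.
Variables (k : fieldType) (R : realType) (n : nat).

Definition pt := 'I_n -> R.
Definition ple (s t : pt) : Prop := forall i, s i <= t i.
Definition pll (s t : pt) : Prop := forall i, s i < t i.
Definition shift (s : pt) (e : R) : pt := fun i => s i + e.
Definition flr (e : R) (s : pt) : pt := fun i => (Num.floor (s i / e))%:~R * e.

(* An n-parameter persistence module R^n -> Vect_k. The structure maps
   pm_map s t are only meaningful (and only constrained) when s <= t. *)
Record pmod := PMod {
  pm_obj : pt -> lmodType k;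
  pm_map : forall s t : pt, {linear pm_obj s -> pm_obj t};
  pm_id : forall s x, pm_map s s x = x;
  pm_comp : forall s t u, ple s t -> ple t u ->
    forall x, pm_map t u (pm_map s t x) = pm_map s u x
}.

Definition finite_rank (U W : lmodType k) (f : U -> W) : Prop :=
  exists (m : nat) (b : 'I_m -> W),
    forall x, exists c : 'I_m -> k, f x = \sum_(i < m) c i *: b i.
Definition fin_dim (W : lmodType k) : Prop :=
  exists (m : nat) (b : 'I_m -> W),
    forall x, exists c : 'I_m -> k, x = \sum_(i < m) c i *: b i.

Definition qtame (V : pmod) : Prop :=
  forall s t, pll s t -> finite_rank (pm_map V s t).

Definition pfd (V : pmod) : Prop := forall s, fin_dim (pm_obj V s).

(* V_s -> lim_{e>0} V_{s+e} is an isomorphism: every compatible family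
   (y_e)_{e>0} is the image of exactly one x in V_s *)
Definition usc (V : pmod) : Prop :=
  forall s (y : forall e : R, pm_obj V (shift s e)),
    (forall e e', 0 < e -> e <= e' ->
       pm_map V (shift s e) (shift s e') (y e) = y e') ->
    exists x, (forall e, 0 < e -> pm_map V s (shift s e) x = y e) /\
      forall x', (forall e, 0 < e -> pm_map V s (shift s e) x' = y e) -> x' = x.

Definition interleaving (V W : pmod) (e : R) : Prop :=
  exists (f : forall s, {linear pm_obj V s -> pm_obj W (shift s e)})
         (g : forall s, {linear pm_obj W s -> pm_obj V (shift s e)}),
    (forall s t, ple s t -> forall x,
        f t (pm_map V s t x) = pm_map W (shift s e) (shift t e) (f s x)) /\
    (forall s t, ple s t -> forall x,
        g t (pm_map W s t x) = pm_map V (shift s e) (shift t e) (g s x)) /\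
    (forall s x, g (shift s e) (f s x) = pm_map V s (shift (shift s e) e) x) /\
    (forall s x, f (shift s e) (g s x) = pm_map W s (shift (shift s e) e) x).

(* V is isomorphic to its restriction-extension V_Q along Q = (e Z)^n:
   (V_Q)_s = V_{flr e s}, with structure maps V_{flr e s, flr e t}. *)
Definition iso_grid (V : pmod) (e : R) : Prop :=
  exists f : forall s, {linear pm_obj V s -> pm_obj V (flr e s)},
    (forall s, bijective (f s)) /\
    (forall s t, ple s t -> forall x,
        f t (pm_map V s t x) = pm_map V (flr e s) (flr e t) (f s x)).

Definition rlfp (V : pmod) : Prop :=
  qtame V /\ usc V /\ pfd V /\ exists e, 0 < e /\ iso_grid V e.

End PersMod.

(* Main.v *)
From HB Require Import structures.
Require Import Defs.
From mathcomp Require Import all_boot all_order all_algebra reals boolp lra.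
Set Implicit Arguments. Unset Strict Implicit. Unset Printing Implicit Defensive.
Import Order.TTheory GRing.Theory Num.Theory.
Local Open Scope ring_scope.

Section Img.
Variables (k : fieldType) (U M : lmodType k) (f : {linear U -> M}).
Definition inim : {pred M} := fun x => `[< exists v, f v = x >].
Fact inim_submod : submod_closed inim.
Proof.
split.
  by apply/asboolP; exists 0; rewrite linear0.
move=> a u v /asboolP[x <-] /asboolP[y <-]; apply/asboolP; exists (a *: x + y).
by rewrite linearP.
Qed.
HB.instance Definition _ := GRing.isSubmodClosed.Build k M inim inim_submod.
Inductive Img : predArgType := ImgC u & u \in inim.
Definition imval w : M := let: ImgC u _ := w in u.
HB.instance Definition _ := [isSub of Img for imval].
HB.instance Definition _ := [Choice of Img by <:].
HB.instance Definition _ := [SubChoice_isSubZmodule of Img by <:].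
HB.instance Definition _ := [SubZmodule_isSubLmodule of Img by <:].
Lemma imval_inj : injective imval. Proof. exact: val_inj. Qed.
Lemma imvalD x y : imval (x + y) = imval x + imval y. Proof. by []. Qed.
Lemma imvalZ a x : imval (a *: x) = a *: imval x. Proof. by []. Qed.
Lemma imval0 : imval 0 = 0. Proof. by []. Qed.
Lemma imval_sum m (c : 'I_m -> k) (b : 'I_m -> Img) :
  imval (\sum_(i < m) c i *: b i) = \sum_(i < m) c i *: imval (b i).
Proof.
elim: m c b => [|m IH] c b; first by rewrite !big_ord0.
by rewrite !big_ord_recl imvalD imvalZ IH.
Qed.
Lemma imvalP w : exists v, f v = imval w.
Proof. by case: w => u /= /asboolP. Qed.
Lemma in_img v : f v \in inim. Proof. by apply/asboolP; exists v. Qed.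
Definition toImg v : Img := ImgC (in_img v).
Lemma toImg_lin : linear toImg.
Proof. by move=> a x y; apply: imval_inj; rewrite /= linearP. Qed.
HB.instance Definition _ := GRing.isLinear.Build k U Img *:%R toImg toImg_lin.
End Img.

Section Span.
Variables (k : fieldType) (M : lmodType k).

Lemma span_sub m : forall (S : M -> Prop) (b : 'I_m -> M),
  S 0 -> (forall a x y, S x -> S y -> S (a *: x + y)) ->
  (forall x, S x -> exists c : 'I_m -> k, x = \sum_(i < m) c i *: b i) ->
  exists m' (b' : 'I_m' -> M), (forall i, S (b' i)) /\
    forall x, S x -> exists c : 'I_m' -> k, x = \sum_(i < m') c i *: b' i.
Proof.
elim: m => [|m IH] S b S0 Sc Sb.
  exists 0%N, b; split; first by case.
  by move=> x /Sb [c ->]; exists c.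
pose br := fun i : 'I_m => b (lift ord0 i).
pose Sp := fun x => S x /\ exists c : 'I_m -> k, x = \sum_(i < m) c i *: br i.
have Sp0 : Sp 0.
  by split => //; exists (fun _ => 0); rewrite big1 // => i _; rewrite scale0r.
have Spc : forall a x y, Sp x -> Sp y -> Sp (a *: x + y).
  move=> a x y [Sx [cx Ex]] [Sy [cy Ey]]; split; first exact: Sc.
  exists (fun i => a * cx i + cy i); rewrite Ex Ey.
  rewrite scaler_sumr -big_split /=; apply: eq_bigr => i _.
  by rewrite scalerDl scalerA.
have [m'' [b'' [Hb'' Hsp'']]] := IH Sp br Sp0 Spc (fun x H => proj2 H).
case: (pselect (forall x, S x -> Sp x)) => [hall|].
  exists m'', b''; split; first by move=> i; case: (Hb'' i).
  by move=> x /hall /Hsp''.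
move=> /existsNP [x0 /not_implyP [Sx0 nSpx0]].
have [c0 Ec0] := Sb x0 Sx0.
have c00 : c0 ord0 != 0.
  apply/negP => /eqP c00; apply: nSpx0; split => //.
  exists (fun i => c0 (lift ord0 i)); rewrite Ec0 big_ord_recl c00 scale0r add0r.
  by [].
pose b' := fun i : 'I_m''.+1 =>
  match unlift ord0 i with Some j => b'' j | None => x0 end.
exists m''.+1, b'; split.
  move=> i; rewrite /b'; case: unlift => [j|] //; by case: (Hb'' j).
move=> x Sx; have [c Ec] := Sb x Sx.
pose t := c ord0 / c0 ord0.
have Spy : Sp ((- t) *: x0 + x).
  split; first by apply: Sc.
  exists (fun i => - t * c0 (lift ord0 i) + c (lift ord0 i)).
  rewrite Ec0 Ec !big_ord_recl scalerDr addrACA.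
  have -> : - t *: (c0 ord0 *: b ord0) + c ord0 *: b ord0 = 0.
    rewrite scalerA -scalerDl /t mulNr divfK // addNr scale0r //.
  rewrite add0r scaler_sumr -big_split /=; apply: eq_bigr => i _.
  by rewrite scalerDl scalerA.
have [d Ed] := Hsp'' _ Spy.
exists (fun i => match unlift ord0 i with Some j => d j | None => t end).
rewrite big_ord_recl /b' unlift_none.
under eq_bigr => i _ do rewrite liftK.
rewrite -Ed addrA scaleNr addrN add0r //.
Qed.
End Span.
Section Flr.
Variables (R : realType) (n : nat) (eps : R).
Hypothesis heps : 0 < eps.
Implicit Types s t u : pt R n.

Lemma ple_refl s : ple s s. Proof. by move=> i. Qed.
Lemma ple_trans s t u : ple s t -> ple t u -> ple s u.
Proof. by move=> h1 h2 i; apply: le_trans (h1 i) (h2 i). Qed.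
Lemma ple_shift s e : 0 <= e -> ple s (shift s e).
Proof. by move=> he i; rewrite /shift lerDl. Qed.
Lemma shift_mono s t e : ple s t -> ple (shift s e) (shift t e).
Proof. by move=> h i; rewrite /shift lerD2r. Qed.

Lemma fl_le x : (Num.floor (x / eps))%:~R * eps <= x.
Proof.
by rewrite -ler_pdivlMr // floor_le.
Qed.
Lemma fl_gt x : x < (Num.floor (x / eps))%:~R * eps + eps.
Proof.
have := floorD1_gt (x / eps); rewrite intrD ltr_pdivrMr // mulrDl mul1r //.
Qed.
Lemma fl_mono x y : x <= y ->
  (Num.floor (x / eps))%:~R * eps <= (Num.floor (y / eps))%:~R * eps.
Proof.
move=> h; rewrite ler_pM2r // ler_int; apply: le_floor.
by rewrite ler_pM2r // invr_gt0.
Qed.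

Lemma flr_le s : ple (flr eps s) s. Proof. by move=> i; apply: fl_le. Qed.
Lemma flr_mono s t : ple s t -> ple (flr eps s) (flr eps t).
Proof. by move=> h i; apply: fl_mono. Qed.
Lemma flr_shift s : ple s (flr eps (shift s eps)).
Proof.
move=> i; rewrite /flr /shift; have := fl_gt (s i + eps); lra.
Qed.
Lemma le_shift_flr s : ple s (shift (flr eps s) eps).
Proof. by move=> i; rewrite /flr /shift; apply: ltW; apply: fl_gt. Qed.
Lemma flr_flr s : flr eps (flr eps s) = flr eps s.
Proof.
apply: funext => i; rewrite /flr mulfK ?gt_eqF // intrKfloor //.
Qed.

Lemma seq_pos (l : seq R) : all (fun x => 0 < x) l ->
  exists e, 0 < e /\ all (fun x => e <= x) l.
Proof.
elim: l => [|x l IH] /=; first by exists 1.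
case/andP=> hx /IH [e [he hl]]; exists (Order.min e x); split.
  by rewrite lt_min he hx.
rewrite ge_min lexx orbT /=; apply/allP => y /(allP hl) hy.
by rewrite ge_min hy.
Qed.

Lemma flr_near s : exists e0, 0 < e0 /\ ple (flr eps (shift s e0)) (flr eps s).
Proof.
pose g := fun i : 'I_n => (Num.floor (s i / eps))%:~R * eps + eps - s i.
have : all (fun x => 0 < x) (map g (enum 'I_n)).
  apply/allP => x /mapP [i _ ->]; rewrite /g; have := fl_gt (s i); lra.
move=> /seq_pos [e [he hl]]; exists (e / 2); split => [|i]; first by lra.
rewrite /flr /shift ler_pM2r // ler_int.
have : e <= g i by apply: (allP hl); apply: map_f; rewrite mem_enum.
rewrite /g => hei.
rewrite -ltzD1 floor_lt_int ltr_pdivrMr // intrD mulrDl mul1r. lra.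
Qed.
End Flr.
Section Wmod.
Variables (k : fieldType) (R : realType) (n : nat) (V : pmod k R n).
Variables (eps : R).
Hypothesis heps : 0 < eps.
Implicit Types p q r s t : pt R n.

Definition Vq q := pm_map V q (shift q eps).
Definition U q := Img (Vq q).

Lemma Vcomp p q r x : ple p q -> ple q r ->
  pm_map V q r (pm_map V p q x) = pm_map V p r x.
Proof. by move=> h1 h2; rewrite pm_comp. Qed.

Lemma pshift q : ple q (shift q eps).
Proof. by apply: ple_shift; apply: ltW. Qed.

Lemma Umem p q (H : ple p q) (w : U p) :
  pm_map V (shift p eps) (shift q eps) (imval w) \in inim (Vq q).
Proof.
have [v Ev] := imvalP w; rewrite -Ev; apply/asboolP; exists (pm_map V p q v).
rewrite /Vq Vcomp ?Vcomp //; [exact: pshift| exact: shift_mono| exact: pshift].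

Qed.

Definition Umap p q (w : U p) : U q :=
  match pselect (ple p q) with left H => ImgC (Umem H w) | right _ => 0 end.
Arguments Umap : clear implicits.

Lemma Umap_lin p q : linear (Umap p q).
Proof.
move=> a x y; rewrite /Umap; case: pselect => H; last by rewrite scaler0 addr0.
by apply: imval_inj; rewrite /= linearP.
Qed.
HB.instance Definition _ p q := GRing.isLinear.Build k (U p) (U q) *:%R (Umap p q) (@Umap_lin p q).

Lemma Umap_val p q w : ple p q ->
  imval (Umap p q w) = pm_map V (shift p eps) (shift q eps) (imval w).
Proof. by move=> h; rewrite /Umap; case: pselect. Qed.

Lemma Umap_id p w : Umap p p w = w.
Proof. by apply: imval_inj; rewrite Umap_val ?pm_id //; apply: ple_refl. Qed.

Lemma Umap_comp p q r w : ple p q -> ple q r -> Umap q r (Umap p q w) = Umap p r w.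
Proof.
move=> h1 h2; apply: imval_inj; rewrite !Umap_val //; last exact: ple_trans h2.
by rewrite Vcomp //; apply: shift_mono.
Qed.

Definition Wobj s := U (flr eps s).
Definition Wmap s t : {linear Wobj s -> Wobj t} := Umap (flr eps s) (flr eps t).

Lemma Wid s x : Wmap s s x = x. Proof. exact: Umap_id. Qed.
Lemma Wcomp s t u : ple s t -> ple t u -> forall x, Wmap t u (Wmap s t x) = Wmap s u x.
Proof. by move=> h1 h2 x; apply: Umap_comp; apply: flr_mono. Qed.

Definition W : pmod k R n := PMod Wid Wcomp.
End Wmod.
Arguments Umap {k R n V eps} heps p q w.
Section Props.
Variables (k : fieldType) (R : realType) (n : nat) (V : pmod k R n).
Variables (eps : R).
Hypothesis heps : 0 < eps.
Implicit Types p q r s t : pt R n.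

Let WW := W V heps.

Lemma WE s t x : pm_map WW s t x = Umap heps (flr eps s) (flr eps t) x.
Proof. by []. Qed.

Lemma Vc p q r (x : pm_obj V p) : ple p q -> ple q r ->
  pm_map V q r (pm_map V p q x) = pm_map V p r x.
Proof. by move=> h1 h2; rewrite pm_comp. Qed.

Lemma epsge : 0 <= eps. Proof. exact: ltW. Qed.

Hint Resolve ple_refl epsge : pledb.
Hint Resolve ple_shift shift_mono flr_mono flr_le flr_shift le_shift_flr : pledb.
Hint Resolve ple_trans | 10 : pledb.
Ltac pl := solve [eauto 6 with pledb].

Lemma U_fin q : qtame V -> fin_dim (U V eps q).
Proof.
move=> hqt.
have hpl : pll q (shift q eps) by move=> i; rewrite /shift ltrDl.
have [m [b hb]] := hqt q (shift q eps) hpl.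
have [|||m' [b' [hb' hsp]]] := @span_sub k _ m (fun x => x \in inim (Vq V eps q)) b.
- by apply/asboolP; exists 0; rewrite linear0.
- by move=> a x y hx hy; apply: (inim_submod _).2.
- by move=> x /asboolP [v <-]; exact: hb v.
exists m', (fun i => ImgC (hb' i)) => w.
case: w => u hu; have [c Ec] := hsp u hu; exists c.
by apply: imval_inj; rewrite imval_sum /=.
Qed.

Lemma W_pfd : qtame V -> pfd WW.
Proof. by move=> hqt s; apply: U_fin. Qed.

Lemma W_qtame : qtame V -> qtame WW.
Proof.
move=> hqt s t _; have [m [b hb]] := W_pfd hqt s.
exists m, (fun i => pm_map WW s t (b i)) => x; have [c ->] := hb x; exists c.
by rewrite linear_sum; apply: eq_bigr => i _; rewrite linearZ.
Qed.

Lemma W_usc : usc WW.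
Proof.
move=> s y hy; have [e0 [he0 hle]] := flr_near heps s.
have h1 : ple (flr eps s) (flr eps (shift s e0)).
  by apply: flr_mono => //; apply: ple_shift; apply: ltW.
exists (Umap heps (flr eps (shift s e0)) (flr eps s) (y e0)); split.
  move=> e he.
  have h3 : ple (flr eps s) (flr eps (shift s e)).
    by apply: flr_mono => //; apply: ple_shift; apply: ltW.
  have h2 : ple (flr eps (shift s e0)) (flr eps (shift s e)).
    exact: ple_trans hle h3.
  rewrite WE Umap_comp //.
  case: (lerP e e0) => hee.
    have h4 : ple (flr eps (shift s e)) (flr eps (shift s e0)).
      by apply: flr_mono => // i; rewrite /shift lerD2l.
    by rewrite -(hy e e0 he hee) WE Umap_comp ?Umap_id.
  by rewrite -(hy e0 e he0 (ltW hee)) WE.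
move=> x' hx'; rewrite -(hx' e0 he0) WE Umap_comp ?Umap_id //.
Qed.

Lemma W_iso : iso_grid WW eps.
Proof.
have ff : forall s, ple (flr eps s) (flr eps (flr eps s)).
  by move=> s; rewrite flr_flr //; apply: ple_refl.
have fb : forall s, ple (flr eps (flr eps s)) (flr eps s).
  by move=> s; rewrite flr_flr //; apply: ple_refl.
exists (fun s => pm_map WW s (flr eps s)); split.
  move=> s; exists (Umap heps (flr eps (flr eps s)) (flr eps s)) => x.
    by rewrite WE Umap_comp ?Umap_id.
  by rewrite WE Umap_comp ?Umap_id.
move=> s t h x; rewrite !WE !Umap_comp //; try by apply: flr_mono.
by apply: flr_mono => //; apply: flr_mono.
Qed.

Definition Fm s (x : pm_obj V s) : U V eps (flr eps (shift s eps)) :=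
  toImg (Vq V eps (flr eps (shift s eps))) (pm_map V s (flr eps (shift s eps)) x).
Lemma Fm_lin s : linear (@Fm s).
Proof. by move=> a x y; apply: imval_inj; rewrite /= !linearP. Qed.
HB.instance Definition _ s := GRing.isLinear.Build k (pm_obj V s) (U V eps (flr eps (shift s eps))) *:%R (@Fm s) (@Fm_lin s).

Definition Gm s (w : U V eps (flr eps s)) : pm_obj V (shift s eps) :=
  pm_map V (shift (flr eps s) eps) (shift s eps) (imval w).
Lemma Gm_lin s : linear (@Gm s).
Proof. by move=> a x y; rewrite /Gm /= !linearP. Qed.
HB.instance Definition _ s := GRing.isLinear.Build k (U V eps (flr eps s)) (pm_obj V (shift s eps)) *:%R (@Gm s) (@Gm_lin s).

Lemma W_inter : interleaving V WW eps.
Proof.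
exists (fun s => (@Fm s : {linear _ -> _})), (fun s => (@Gm s : {linear _ -> _})).
split; [|split; [|split]].
- move=> s t h x; apply: imval_inj; rewrite WE Umap_val; last by pl.
  rewrite /= /Vq !Vc //; pl.
- move=> s t h w; rewrite WE /= /Gm Umap_val; last by pl.
  rewrite !Vc //; pl.
- move=> s x; rewrite /= /Gm /= /Vq !Vc //; pl.
- move=> s w; apply: imval_inj; rewrite WE Umap_val; last by pl.
  rewrite /= /Gm /Vq !Vc //; pl.
Qed.
End Props.

Theorem lemma4p22 (k : fieldType) (R : realType) (n : nat) (V : pmod k R n) :
  qtame V -> usc V ->
  forall delta : R, 0 < delta ->
  exists W : pmod k R n, rlfp W /\
    exists e : R, 0 <= e /\ e < delta /\ interleaving V W e.
Proof.
move=> hqt _ delta hd.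
have he : 0 < delta / 2 by lra.
exists (W V he); split.
  split; first exact: W_qtame.
  split; first exact: W_usc.
  split; first exact: W_pfd.
  by exists (delta / 2); split => //; apply: W_iso.
exists (delta / 2); split; first lra.
split; first lra.
exact: W_inter.
Qed.
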